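(* For every $m \in \mathbb{N}$ and every $c \geq 0$, the eigenvalues of the $2m\times 2m$ matrix $\tilde{H}_c(m) = \begin{bmatrix} \tilde{A} + 2cI & \tilde{B} \\ \tilde{B}^* & \hat{A} - 2cI \end{bmatrix}$ come in plus/minus pairs (including multiplicity) and $(-2|c - 1|,2|c - 1|) \cap \sigma(\tilde{H}_c(m)) =\emptyset$. Moreover $(-2|c - 1|,2|c - 1|)$ is the largest interval around zero with this property, i.e. it is the stable spectral gap of $\tilde{H}_c$: in particular it contains no spurious eigenvalues whatsoever.
   Context: Here $\tilde A,\tilde B,\hat A$ are real $m\times m$ tridiagonal matrices: $\tilde A$ has all super- and subdiagonal entries $1$ and diagonal $(1,0,\dots,0,-1)$; $\tilde B$ has superdiagonal entries $1$, subdiagonal entries $-1$ and diagonal $(1,0,\dots,0,1)$; $\hat A$ has all super- and subdiagonal entries $-1$ and diagonal $(1,0,\dots,0,-1)$. Equivalently, $\tilde H_c = U\tilde K_c U$ with $U=\frac{1}{\sqrt2}\begin{bmatrix} I & I\\ I & -I\end{bmatrix}$ and $\tilde K_c = 2\begin{bmatrix} e_me_m^T & T_c\\ T_c^* & -e_1e_1^T\end{bmatrix}$, where $T_c$ is the $m\times m$ lower bidiagonal matrix with diagonal entries $c$ and subdiagonal entries $1$, and $e_1,\dots,e_m$ is the canonical basis. $\tilde H_c$ is a low-rank boundary modification of $H_c(2m)=\begin{bmatrix} A+2cI & B\\ -B & -A-2cI\end{bmatrix}$, where $A$ is tridiagonal with zero diagonal and ones off the diagonal and $B$ is tridiagonal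 with zero diagonal, superdiagonal $1$ and subdiagonal $-1$. An interval around zero is called a stable spectral gap if it is disjoint from $\sigma(\tilde H_c(m))$ for all $m$ and is the largest such interval. *)

(* Defs.v *)
From HB Require Import structures.
From mathcomp Require Import all_boot all_order all_algebra.
From mathcomp Require Import reals.
From mathcomp Require Import complex.
Set Implicit Arguments. Unset Strict Implicit. Unset Printing Implicit Defensive.
Import Order.TTheory GRing.Theory Num.Theory.
Local Open Scope ring_scope.

Section Mats.
Variable R : realType.
Variable m : nat.

(* boundary diagonal pattern (1,0,...,0,-1); contributions of e_1 and e_m
   add up (relevant only when m = 1) *)
Definition dminus (i : 'I_m) : R := (i == 0%N :> nat)%:R - (i == m.-1 :> nat)%:R.
Definition dplus (i : 'I_m) : R := (i == 0%N :> nat)%:R + (i == m.-1 :> nat)%:R.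

Definition Atil : 'M[R]_m := \matrix_(i, j)
  if (j == i.+1 :> nat) || (i == j.+1 :> nat) then 1
  else if i == j then dminus i else 0.

Definition Btil : 'M[R]_m := \matrix_(i, j)
  if (j == i.+1 :> nat) then 1
  else if (i == j.+1 :> nat) then -1
  else if i == j then dplus i else 0.

Definition Ahat : 'M[R]_m := \matrix_(i, j)
  if (j == i.+1 :> nat) || (i == j.+1 :> nat) then -1
  else if i == j then dminus i else 0.

(* tilde H_c(m) = [[Atil + 2c I, Btil], [Btil^*, Ahat - 2c I]]  (real entries,
   so Btil^* = Btil^T) *)
Definition Htil (c : R) : 'M[R]_(m + m) :=
  block_mx (Atil + (2 * c)%:M) Btil (Btil^T) (Ahat - (2 * c)%:M).

Definition HtilC (c : R) : 'M[R[i]]_(m + m) :=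
  map_mx (fun x => (x%:C)%C) (Htil c).
End Mats.

(* Main.v *)
Require Import Defs.
From HB Require Import structures.
From mathcomp Require Import all_boot all_order all_algebra.
From mathcomp Require Import reals.
From mathcomp Require Import complex.
From mathcomp Require Import trigo.
From mathcomp Require Import zify ring lra.
Import Order.TTheory GRing.Theory Num.Theory.
Local Open Scope ring_scope.


Section Basic.
Variable R : realType.
Variable m : nat.

Lemma sum_delta (n : nat) (F : 'I_m -> R) :
  (forall k : 'I_m, (k:nat) != n -> F k = 0) -> \sum_k F k = oapp F 0 (insub n).
Proof.
move=> H; case: insubP => [k _ kn|nm] /=.
  rewrite (bigD1 k) //= big1 ?addr0 // => j jk; apply: H.
  by rewrite -kn; apply: contra jk => /eqP e; apply/eqP/val_inj.
by rewrite big1 // => k _; apply: H; apply: contra nm => /eqP <-.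
Qed.

Ltac bsplit := repeat match goal with
 | |- context [ (?a == ?b :> nat) ] => case: (a =P b) => ?
 | |- context [ (?a < ?b)%N ] => case: (ltnP a b) => ?
 end.

Ltac fin := intros; rewrite -?val_eqE /=; bsplit; rewrite /= ?(mul0r,mulr0,mul1r,mulr1,addr0,add0r,subr0,sub0r,subrr,oppr0) //; exfalso; lia.

Ltac sd n := rewrite (@sum_delta n);
  [ let kk := fresh "kk" in let hkk := fresh "hkk" in
    case: insubP => [kk _ /= hkk|hkk] /= ; rewrite ?mxE; try (have := ltn_ord kk); try fin
  | let kk := fresh "kk" in let hkk := fresh "hkk" in
    move=> kk hkk; rewrite ?mxE; have := ltn_ord kk; fin ].

Definition Sh : 'M[R]_m := \matrix_(i,j) ((j:nat) == i.+1)%:R.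
Definition E0 : 'M[R]_m := \matrix_(i,j) (((i:nat) == 0%N) && ((j:nat) == 0%N))%:R.
Definition El : 'M[R]_m := \matrix_(i,j) (((i:nat) == m.-1) && ((j:nat) == m.-1))%:R.
Definition Jr : 'M[R]_m := \matrix_(i,j) ((i + j)%N == m.-1)%:R.

Lemma SSt : Sh *m Sh^T = 1%:M - El.
Proof.
apply/matrixP=> i j; rewrite !mxE.
have := ltn_ord i; have := ltn_ord j.
sd i.+1.
Qed.


Lemma StS : Sh^T *m Sh = 1%:M - E0.
Proof. apply/matrixP=> i j; rewrite !mxE; have := ltn_ord i; have := ltn_ord j; sd i.-1. Qed.
Lemma SE0 : Sh *m E0 = 0.
Proof. apply/matrixP=> i j; rewrite !mxE; have := ltn_ord i; have := ltn_ord j; sd i.+1. Qed.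
Lemma E0St : E0 *m Sh^T = 0.
Proof. apply/matrixP=> i j; rewrite !mxE; have := ltn_ord i; have := ltn_ord j; sd 0%N. Qed.
Lemma ElS : El *m Sh = 0.
Proof. apply/matrixP=> i j; rewrite !mxE; have := ltn_ord i; have := ltn_ord j; sd m.-1. Qed.
Lemma StEl : Sh^T *m El = 0.
Proof. apply/matrixP=> i j; rewrite !mxE; have := ltn_ord i; have := ltn_ord j; sd i.-1. Qed.
Lemma E0E0 : E0 *m E0 = E0.
Proof. apply/matrixP=> i j; rewrite !mxE; have := ltn_ord i; have := ltn_ord j; sd 0%N. Qed.
Lemma ElEl : El *m El = El.
Proof. apply/matrixP=> i j; rewrite !mxE; have := ltn_ord i; have := ltn_ord j; sd m.-1. Qed.
Lemma trE0 : E0^T = E0.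
Proof. apply/matrixP=> i j; rewrite !mxE; have := ltn_ord i; have := ltn_ord j; fin. Qed.
Lemma trEl : El^T = El.
Proof. apply/matrixP=> i j; rewrite !mxE; have := ltn_ord i; have := ltn_ord j; fin. Qed.
Lemma trJ : Jr^T = Jr.
Proof. apply/matrixP=> i j; rewrite !mxE; have := ltn_ord i; have := ltn_ord j; fin. Qed.
Lemma JJ : Jr *m Jr = 1%:M.
Proof. apply/matrixP=> i j; rewrite !mxE; have := ltn_ord i; have := ltn_ord j; sd (m.-1 - i)%N. Qed.
Lemma JS : Jr *m Sh = Sh^T *m Jr.
Proof. apply/matrixP=> i j; rewrite !mxE; have := ltn_ord i; have := ltn_ord j; sd (m.-1 - i)%N; sd i.-1. Qed.
Lemma JSt : Jr *m Sh^T = Sh *m Jr.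
Proof. apply/matrixP=> i j; rewrite !mxE; have := ltn_ord i; have := ltn_ord j; sd (m.-1 - i)%N; sd i.+1. Qed.
Lemma JE0 : Jr *m E0 = El *m Jr.
Proof. apply/matrixP=> i j; rewrite !mxE; have := ltn_ord i; have := ltn_ord j; sd (m.-1 - i)%N; sd m.-1. Qed.
Lemma JEl : Jr *m El = E0 *m Jr.
Proof. apply/matrixP=> i j; rewrite !mxE; have := ltn_ord i; have := ltn_ord j; sd (m.-1 - i)%N; sd 0%N. Qed.
Lemma AtilE : Atil R m = Sh + Sh^T + E0 - El.
Proof. apply/matrixP=> i j; rewrite !mxE /dminus; have := ltn_ord i; have := ltn_ord j; fin. Qed.
Lemma BtilE : Btil R m = Sh - Sh^T + E0 + El.
Proof. apply/matrixP=> i j; rewrite !mxE /dplus; have := ltn_ord i; have := ltn_ord j; fin. Qed.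
Lemma AhatE : Ahat R m = - (Sh + Sh^T) + E0 - El.
Proof. apply/matrixP=> i j; rewrite !mxE /dminus; have := ltn_ord i; have := ltn_ord j; fin. Qed.

Ltac genprod := repeat match goal with |- context [?A *m ?B] => let X := fresh "X" in move: (A *m B) => X end.
Ltac expand := rewrite ?linearD ?linearB ?linearN /= ?trmxK ?trE0 ?trEl ?linearD ?linearN /=
  ?mulmxDl ?mulmxDr ?mulmxBl ?mulmxBr ?mulmxN ?mulNmx ?opprK
  ?SSt ?StS ?SE0 ?E0St ?ElS ?StEl ?E0E0 ?ElEl ?mulmxDl ?mulmxDr ?mulmxBl ?mulmxBr ?mul1mx ?mulmx1.
Ltac mxring := genprod; apply/matrixP => ii jj; rewrite !mxE; ring.

Lemma K1 : Atil R m *m Atil R m + Btil R m *m (Btil R m)^T = 4%:M.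
Proof. rewrite AtilE BtilE; expand; mxring. Qed.
End Basic.


Section Alg.
Variable R : realType.
Variable m : nat.
Local Notation Sh := (Sh R m).
Local Notation E0 := (E0 R m).
Local Notation El := (El R m).
Local Notation Jr := (Jr R m).
Local Notation A := (Atil R m).
Local Notation B := (Btil R m).
Local Notation Ah := (Ahat R m).

Ltac genprod := repeat match goal with |- context [?X *m ?Y] => let Z := fresh "X" in move: (X *m Y) => Z end.
Ltac expand := rewrite ?linearD ?linearB ?linearN /= ?trmxK ?trE0 ?trEl ?trmx1
  ?mulmxDl ?mulmxDr ?mulmxBl ?mulmxBr ?mulmxN ?mulNmx ?opprK
  ?SSt ?StS ?SE0 ?E0St ?ElS ?StEl ?E0E0 ?ElEl ?mulmxDl ?mulmxDr ?mulmxBl ?mulmxBr ?mul1mx ?mulmx1.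
Ltac mxring := genprod; apply/matrixP => ii jj; rewrite !mxE; ring.

Lemma K2 : A *m B + B *m Ah = 0.
Proof. rewrite AtilE BtilE AhatE; expand; mxring. Qed.
Lemma K3 : B^T *m B + Ah *m Ah = 4%:M.
Proof. rewrite AhatE BtilE; expand; mxring. Qed.
Lemma trA : A^T = A.
Proof. rewrite AtilE; expand; mxring. Qed.
Lemma trAh : Ah^T = Ah.
Proof. rewrite AhatE; expand; mxring. Qed.
Lemma JA : Jr *m A = - (Ah *m Jr).
Proof. rewrite AtilE AhatE; expand; rewrite JS JSt JE0 JEl. mxring. Qed.
Lemma JAh : Jr *m Ah = - (A *m Jr).
Proof. rewrite AtilE AhatE; expand; rewrite JS JSt JE0 JEl. mxring. Qed.
Lemma JB : Jr *m B = B^T *m Jr.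
Proof. rewrite BtilE; expand; rewrite JS JSt JE0 JEl; mxring. Qed.
Lemma JBt : Jr *m B^T = B *m Jr.
Proof. rewrite BtilE; expand; rewrite JS JSt JE0 JEl; mxring. Qed.
Lemma A2 : A + 2%:M = (1%:M + Sh) *m (1%:M + Sh)^T + E0 *m E0^T.
Proof. rewrite AtilE; expand; mxring. Qed.
Lemma Ah2 : - Ah + 2%:M = (1%:M + Sh^T) *m (1%:M + Sh^T)^T + El *m El^T.
Proof. rewrite AhatE; expand; mxring. Qed.

Definition Sm : 'M[R]_(m + m) := block_mx 0 Jr (- Jr) 0.

Lemma SmH (c : R) : Sm *m Htil m c = - (Htil m c *m Sm).
Proof.
rewrite /Htil /Sm !mulmx_block opp_block_mx.
rewrite ?mulmxDl ?mulmxDr ?mulmxBl ?mulmxBr ?mulmxN ?mulNmx ?mul0mx ?mulmx0 ?mul_mx_scalar ?mul_scalar_mx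
  ?linearD ?linearB ?linearZ /= JA JAh JB JBt.
by congr block_mx; genprod; apply/matrixP => ii jj; rewrite !mxE; ring.
Qed.

Lemma SmSm : Sm *m Sm = - 1%:M.
Proof.
rewrite /Sm mulmx_block ?mulmxN ?mulNmx ?mul0mx ?mulmx0 JJ (scalar_mx_block m m) opp_block_mx.
by congr block_mx; genprod; apply/matrixP => ii jj; rewrite !mxE; ring.
Qed.

Lemma H2 (c : R) : Htil m c *m Htil m c =
  block_mx ((4 + 4 * c ^+ 2)%:M + (4 * c) *: A) 0 0 ((4 + 4 * c ^+ 2)%:M - (4 * c) *: Ah).
Proof.
have K1' : B *m B^T = 4%:M - A *m A by rewrite -(K1 R m) addrC addKr.
have K3' : B^T *m B = 4%:M - Ah *m Ah by rewrite -K3 addrK.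
have K2' : B *m Ah = - (A *m B) by apply/eqP; rewrite -addr_eq0 addrC K2.
have K2t : Ah *m B^T = - (B^T *m A).
  by rewrite -trAh -trmx_mul -[in RHS]trA -trmx_mul -linearN /= -K2' .
rewrite /Htil !mulmx_block.
rewrite ?mulmxDl ?mulmxDr ?mulmxBl ?mulmxBr ?mulmxN ?mulNmx ?mul0mx ?mulmx0 ?mul_mx_scalar ?mul_scalar_mx
  K1' K3' K2' K2t ?scale_scalar_mx.
by congr block_mx; genprod; apply/matrixP => ii jj; rewrite !mxE; ring.
Qed.
End Alg.


Section Pair.
Variable F : fieldType.

Lemma mup_even (p : {poly F}) (lam : F) : p != 0 -> p \Po (- 'X) = p -> mup lam p = mup (- lam) p.
Proof.
move=> pn0 hp.
suff H : forall l, (mup l p <= mup (- l) p)%N.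
  by apply/eqP; rewrite eqn_leq H -{2}(opprK lam) H.
move=> l; rewrite mup_geq //.
have h1 : ('X - l%:P) ^+ (mup l p) %| p by rewrite -mup_geq.
have := dvdp_comp_poly (- 'X) h1; rewrite hp rmorphXn /= comp_polyB comp_polyX comp_polyC.
have -> : - 'X - l%:P = - ('X - (- l)%:P) :> {poly F} by rewrite polyCN opprD opprK.
rewrite exprNn => h2; apply: dvdp_trans h2; exact: dvdp_mull.
Qed.

Lemma char_poly_even n (M Sx : 'M[F]_n) :
  Sx *m M = - (M *m Sx) -> Sx \in unitmx -> ~~ odd n -> (char_poly M) \Po (- 'X) = char_poly M.
Proof.
move=> hS hU hn.
have e1 : (char_poly M) \Po (- 'X) = \det (- char_poly_mx (- M)).
  rewrite /char_poly -det_map_mx; congr (\det _); apply/matrixP => i j.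
  rewrite !mxE /=; case: (i == j) => /=; rewrite ?mulr1n ?mulr0n ?comp_polyB ?comp_polyX ?comp_polyC
     ?comp_poly0 ?polyCN; ring.
rewrite e1 -scaleN1r detZ.
have -> : (-1 : {poly F}) ^+ n = 1 by rewrite -signr_odd (negbTE hn) expr0.
rewrite mul1r.
set Sp := map_mx (@polyC F) Sx.
have hc : Sp *m char_poly_mx (- M) = char_poly_mx M *m Sp.
  rewrite /char_poly_mx map_mxN opprK mulmxDr mulmxBl scalar_mxC -map_mxM hS map_mxN map_mxM.
  by [].
have := congr1 (fun A => \det A) hc; rewrite /= !det_mulmx mulrC /char_poly.
have dS : \det Sp != 0.
  rewrite /Sp det_map_mx polyC_eq0; move: hU; rewrite unitmxE unitfE //.
by move/(mulIf dS).
Qed.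
End Pair.


Ltac bsplit := repeat match goal with
 | |- context [ (?a == ?b :> nat) ] => case: (a =P b) => ?
 | |- context [ (?a < ?b)%N ] => case: (ltnP a b) => ?
 end.

Ltac fin := intros; rewrite -?val_eqE /=; bsplit; rewrite /= ?(mul0r,mulr0,mul1r,mulr1,addr0,add0r,subr0,sub0r,subrr,oppr0) //; exfalso; lia.

Ltac sd n := rewrite (@sum_delta _ _ n);
  [ let kk := fresh "kk" in let hkk := fresh "hkk" in
    case: insubP => [kk _ /= hkk|hkk] /= ; rewrite ?mxE; try (have := ltn_ord kk); try fin
  | let kk := fresh "kk" in let hkk := fresh "hkk" in
    move=> kk hkk; rewrite ?mxE; have := ltn_ord kk; fin ].


Section Eig.
Variable R : realType.

Ltac rowtac n := rewrite mxE (@sum_delta R _ n);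
  [ let kk := fresh "kk" in let hkk := fresh "hkk" in
    case: insubP => [kk _ /= hkk|hkk] /=; [rewrite ?mxE hkk; have := ltn_ord kk; fin | fin]
  | let kk := fresh "kk" in let hkk := fresh "hkk" in
    move=> kk hkk; rewrite ?mxE; have := ltn_ord kk; fin ].

Lemma rowSh m (f : nat -> R) (j : 'I_m) :
  ((\row_(k < m) f k) *m Sh R m) 0 j = (0 < j)%:R * f j.-1.
Proof. have := ltn_ord j; rowtac j.-1. Qed.

Lemma rowSt m (f : nat -> R) (j : 'I_m) :
  ((\row_(k < m) f k) *m (Sh R m)^T) 0 j = (j.+1 < m)%:R * f j.+1.
Proof. have := ltn_ord j; rowtac j.+1. Qed.
Lemma rowE0 m (f : nat -> R) (j : 'I_m) :
  ((\row_(k < m) f k) *m E0 R m) 0 j = (j == 0%N :> nat)%:R * f 0%N.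
Proof. have := ltn_ord j; rowtac 0%N. Qed.
Lemma rowEl m (f : nat -> R) (j : 'I_m) :
  ((\row_(k < m) f k) *m El R m) 0 j = (j == m.-1 :> nat)%:R * f m.-1.
Proof. have := ltn_ord j; rowtac m.-1. Qed.

Lemma entDj n (A B : 'M[R]_(1, n)) j : (A + B) 0 j = A 0 j + B 0 j.
Proof. by rewrite mxE. Qed.
Lemma entBj n (A B : 'M[R]_(1, n)) j : (A - B) 0 j = A 0 j - B 0 j.
Proof. by rewrite !mxE. Qed.

Lemma entNj n (A : 'M[R]_(1, n)) j : (- A) 0 j = - A 0 j.
Proof. by rewrite !mxE. Qed.

Definition phi n : R := (pi / 2) / (n.+1)%:R.
Definition fr n (r : R) := sin ((r + 1 / 2) * phi n).
Definition yv n : 'rV[R]_(n.+1) := \row_(k < n.+1) ((-1) ^+ k * fr n k%:R).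

Lemma frT n r : fr n (r - 1) + fr n (r + 1) = 2 * cos (phi n) * fr n r.
Proof.
rewrite /fr.
have -> : (r - 1 + 1 / 2) * phi n = (r + 1 / 2) * phi n - phi n by ring.
have -> : (r + 1 + 1 / 2) * phi n = (r + 1 / 2) * phi n + phi n by ring.
rewrite sinB sinD; ring.
Qed.

Lemma frB0 n : fr n (-1) = - fr n 0.
Proof.
by rewrite /fr -sinN; congr sin; field.
Qed.

Lemma frBm n : fr n (n.+1%:R) = fr n n%:R.
Proof.
rewrite /fr /phi.
have hn : (n.+1%:R : R) != 0 by rewrite pnatr_eq0.
have -> : (n.+1%:R + 1 / 2) * (pi / 2 / n.+1%:R) = (1/2) * (pi / 2 / n.+1%:R) + pi / 2 :> R.
  by field; rewrite nat1r.
have -> : (n%:R + 1 / 2) * (pi / 2 / n.+1%:R) = pi / 2 - (1/2) * (pi / 2 / n.+1%:R) :> R.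
  by field; rewrite nat1r.
by rewrite sinDpihalf sinB sin_pihalf cos_pihalf mul1r mul0r subr0 mul1r.
Qed.

Lemma frTn n k : fr n k%:R + fr n k.+2%:R = 2 * cos (phi n) * fr n k.+1%:R.
Proof.
have e1 : (k.+1%:R - 1 : R) = k%:R by rewrite -natr1 addrK.
have e2 : (k.+1%:R + 1 : R) = k.+2%:R by rewrite natr1.
by rewrite -(frT n k.+1%:R) e1 e2.
Qed.

Lemma frT0 n : - fr n 0%:R + fr n 1%:R = 2 * cos (phi n) * fr n 0%:R.
Proof. have := frT n 0; rewrite sub0r add0r frB0 //. Qed.

Lemma yvA n : yv n *m Atil R n.+1 = (- (2 * cos (phi n))) *: yv n.
Proof.
apply/matrixP => i j; rewrite ord1 AtilE.
rewrite !(mulmxDr, mulmxBr) mulmxN !(entDj, entBj, entNj) /yv.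
set g := fun k : nat => (-1) ^+ k * fr n k%:R.
rewrite (rowSh _ g) (rowSt _ g) (rowE0 _ g) (rowEl _ g) !mxE /g; clear g.
have Bm := frBm n.
case: j => [[|i'] hj].
- have T := frT0 n.
  case: n hj T Bm => [|n'] hj T Bm.
  + rewrite /= ?expr0 ?expr1; move: T; rewrite Bm => T; lra.
  + rewrite /= ?expr0 ?expr1; lra.
- have T := frTn n i'.
  rewrite /= !exprS.
  case: (ltnP i'.+2 n.+1) => h2.
  + have -> : (i'.+1 == n) = false by apply/negbTE; move: h2; lia.
    have := congr1 (fun z => (-1) ^+ i' * z) T => /=. lra.
  + have en : n = i'.+1 by move: h2 hj; lia.
    subst n. rewrite eqxx /=.
    move: T; rewrite Bm => T.
    have := congr1 (fun z => (-1) ^+ i' * z) T => /=. rewrite !exprS. lra.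
Qed.
End Eig.
Set Implicit Arguments. Unset Strict Implicit.


Section Gap.
Variable R : realType.

Ltac genprod := repeat match goal with |- context [?X *m ?Y] => let Z := fresh "X" in move: (X *m Y) => Z end.

Definition Qf {n} (w : 'rV[R]_n) : R := (w *m w^T) 0 0.

Lemma Qf_ge0 n (w : 'rV[R]_n) : 0 <= Qf w.
Proof. rewrite /Qf mxE; apply: sumr_ge0 => j _; by rewrite mxE -expr2 sqr_ge0. Qed.

Lemma Qf_gt0 n (w : 'rV[R]_n) : w != 0 -> 0 < Qf w.
Proof.
move=> wn0; rewrite lt_def Qf_ge0 andbT; apply: contra wn0 => /eqP.
rewrite /Qf mxE => /psumr_eq0P H.
have H0 : forall i : 'I_n, true -> 0 <= w 0 i * w^T i 0 by move=> i _; rewrite mxE -expr2 sqr_ge0.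
apply/eqP/matrixP => i j.
have := H H0 j isT; rewrite !mxE ord1 => /eqP; rewrite mulf_eq0 orbb => /eqP ->.
by rewrite ?mxE.
Qed.

Lemma quad n (w : 'rV[R]_n) (a b : R) (M1 M2 : 'M[R]_n) :
  ((w *m (a%:M + b *: (M1 *m M1^T + M2 *m M2^T - 2%:M))) *m w^T) 0 0
  = a * Qf w + b * (Qf (w *m M1) + Qf (w *m M2) - 2 * Qf w).
Proof.
rewrite /Qf !trmx_mul !mulmxA.
rewrite ?mulmxDr ?mulmxBr ?mulmxDl ?mulmxBl ?mul_mx_scalar ?mul_scalar_mx -?scalemxAl -?scalemxAr ?mulmxN ?mulNmx.
rewrite ?mulmxDr ?mulmxBr ?mulmxDl ?mulmxBl ?mul_mx_scalar ?mul_scalar_mx -?scalemxAl -?scalemxAr ?mulmxN ?mulNmx.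
rewrite ?mulmxDr ?mulmxBr ?mulmxDl ?mulmxBl ?mul_mx_scalar ?mul_scalar_mx -?scalemxAl -?scalemxAr ?mulmxN ?mulNmx.
rewrite ?mulmxDr ?mulmxBr ?mulmxDl ?mulmxBl ?mul_mx_scalar ?mul_scalar_mx -?scalemxAl -?scalemxAr ?mulmxN ?mulNmx.
rewrite ?mulmxA.
genprod; rewrite !mxE; ring.
Qed.

Lemma entD (A B : 'M[R]_1) : (A + B) 0 0 = A 0 0 + B 0 0.
Proof. by rewrite mxE. Qed.

Lemma entZ n (a : R) (A : 'M[R]_(1, n)) j : (a *: A) 0 j = a * A 0 j.
Proof. by rewrite mxE. Qed.

Lemma Qf_row n1 n2 (v1 : 'rV[R]_n1) (v2 : 'rV[R]_n2) : Qf (row_mx v1 v2) = Qf v1 + Qf v2.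
Proof. by rewrite /Qf tr_row_mx mul_row_col entD. Qed.

Lemma gap_real m (c x : R) (v : 'rV[R]_(m + m)) :
  0 <= c -> v != 0 -> v *m Htil m c = x *: v -> 4 * (c - 1) ^+ 2 <= x ^+ 2.
Proof.
move=> hc vn0 hv.
have h2 : v *m (Htil m c *m Htil m c) = (x ^+ 2) *: v.
  by rewrite mulmxA hv -scalemxAl hv scalerA expr2.
rewrite H2 in h2.
have := congr1 (fun M => (M *m v^T) 0 0) h2 => /=.
have Qv := Qf_gt0 vn0.
rewrite -scalemxAl entZ -/(Qf v).
move: Qv; rewrite -[v]hsubmxK Qf_row.
set v1 := lsubmx v; set v2 := rsubmx v => Qv.
rewrite mul_row_block !mulmx0 addr0 add0r tr_row_mx mul_row_col entD.
have eA : Atil R m = (1%:M + Sh R m) *m (1%:M + Sh R m)^T + E0 R m *m (E0 R m)^T - 2%:M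
  by rewrite -A2 addrK.
have eAh : - Ahat R m = (1%:M + (Sh R m)^T) *m (1%:M + (Sh R m)^T)^T + El R m *m (El R m)^T - 2%:M
  by rewrite -Ah2 addrK.
rewrite eA -scalerN eAh !quad.
have := Qf_ge0 (v1 *m (1%:M + Sh R m)); have := Qf_ge0 (v1 *m E0 R m);
have := Qf_ge0 (v2 *m (1%:M + (Sh R m)^T)); have := Qf_ge0 (v2 *m El R m).
have := Qf_ge0 v1; have := Qf_ge0 v2.
move: (Qf v1) (Qf v2) (Qf (v1 *m (1%:M + Sh R m))) (Qf (v1 *m E0 R m))
  (Qf (v2 *m (1%:M + (Sh R m)^T))) (Qf (v2 *m El R m)) Qv => q1 q2 a1 a2 b1 b2 Qv.
move=> q2p q1p b2p b1p a2p a1p e.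
have h : (x ^+ 2 - 4 * (c - 1) ^+ 2) * (q1 + q2) = 4 * c * (a1 + a2 + b1 + b2).
  rewrite mulrBl -e; ring.
have h' : 0 <= (x ^+ 2 - 4 * (c - 1) ^+ 2) * (q1 + q2).
  by rewrite h; apply: mulr_ge0; [lra | lra].
rewrite -subr_ge0; move: h'; rewrite pmulr_lge0 //.
Qed.
End Gap.


Section Cx.
Variable R : realType.
Local Notation toC := (real_complex R).

Lemma Re_sum n (F : 'I_n -> R[i]) : complex.Re (\sum_k F k) = \sum_k complex.Re (F k).
Proof.
apply: (big_ind2 (fun a b => complex.Re a = b)); [reflexivity | by move=> [a1 b1] x2 [a2 b2] y2 <- <- | by []].
Qed.
Lemma Im_sum n (F : 'I_n -> R[i]) : complex.Im (\sum_k F k) = \sum_k complex.Im (F k).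
Proof.
apply: (big_ind2 (fun a b => complex.Im a = b)); [reflexivity | by move=> [a1 b1] x2 [a2 b2] y2 <- <- | by []].
Qed.
Lemma Re_mulr (z : R[i]) (r : R) : complex.Re (z * toC r) = complex.Re z * r.
Proof. case: z => a b /=; ring. Qed.
Lemma Im_mulr (z : R[i]) (r : R) : complex.Im (z * toC r) = complex.Im z * r.
Proof. case: z => a b /=; ring. Qed.
Lemma Re_mull (z : R[i]) (r : R) : complex.Re (toC r * z) = r * complex.Re z.
Proof. case: z => a b /=; ring. Qed.
Lemma Im_mull (z : R[i]) (r : R) : complex.Im (toC r * z) = r * complex.Im z.
Proof. case: z => a b /=; ring. Qed.

Lemma re_eig n (M : 'M[R]_n) (x : R) (v : 'rV[R[i]]_n) :
  v *m map_mx toC M = toC x *: v ->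
  map_mx (@complex.Re R) v *m M = x *: map_mx (@complex.Re R) v /\
  map_mx (@complex.Im R) v *m M = x *: map_mx (@complex.Im R) v.
Proof.
move=> h; split; apply/matrixP => i j.
  have := congr1 (fun A : 'M[R[i]]_(1, n) => complex.Re (A i j)) h; rewrite /= !mxE Re_sum Re_mull => hh.
  rewrite ?mxE -hh.
  by apply: eq_bigr => k _; rewrite !mxE Re_mulr.
have := congr1 (fun A : 'M[R[i]]_(1, n) => complex.Im (A i j)) h; rewrite /= !mxE Im_sum Im_mull => hh.
  rewrite ?mxE -hh.
by apply: eq_bigr => k _; rewrite !mxE Im_mulr.
Qed.

Lemma gapC m (c x : R) : 0 <= c -> eigenvalue (HtilC m c) (x%:C)%C -> 4 * (c - 1) ^+ 2 <= x ^+ 2.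
Proof.
move=> hc /eigenvalueP [v hv vn0].
rewrite /HtilC in hv.
have [hr hi] := re_eig hv.
case: (eqVneq (map_mx (@complex.Re R) v) 0) => [hr0|hrn]; last exact: gap_real hc hrn hr.
case: (eqVneq (map_mx (@complex.Im R) v) 0) => [hi0|hin]; last exact: gap_real hc hin hi.
exfalso; move/eqP: vn0; apply; apply/matrixP => i j.
have := congr1 (fun A : 'M[R]_(1, m + m) => A i j) hr0.
have := congr1 (fun A : 'M[R]_(1, m + m) => A i j) hi0.
rewrite !mxE; case: (v i j) => a b /= -> ->; reflexivity.
Qed.
End Cx.


Section Edge.
Variable R : realType.
Local Notation toC := (real_complex R).

Lemma swap_eig n (M Sx : 'M[R]_n) (u : 'rV_n) (l : R) :
  Sx *m M = - (M *m Sx) -> Sx *m Sx = - 1%:M -> u != 0 -> u *m M = l *: u ->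
  (u *m Sx != 0) /\ (u *m Sx) *m M = (- l) *: (u *m Sx).
Proof.
move=> hS hSS un0 hu; split.
  apply: contra un0 => /eqP h; have := congr1 (fun A => A *m Sx) h.
  by rewrite /= -mulmxA hSS mulmxN mulmx1 mul0mx => /eqP; rewrite oppr_eq0.
by rewrite -mulmxA hS mulmxN mulmxA hu -scalemxAl scaleNr.
Qed.

Lemma sq_eig n (M Sx : 'M[R]_n) (w : 'rV_n) (l : R) :
  Sx *m M = - (M *m Sx) -> Sx *m Sx = - 1%:M -> w != 0 -> w *m (M *m M) = (l ^+ 2) *: w ->
  exists2 u : 'rV_n, u != 0 & u *m M = l *: u.
Proof.
move=> hS hSS wn0 hw.
case: (eqVneq (w *m M + l *: w) 0) => [h0|hn].
  have hwM : w *m M = (- l) *: w by rewrite scaleNr; apply/eqP; rewrite -addr_eq0 h0.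
  have [h1 h2] := swap_eig hS hSS wn0 hwM.
  by exists (w *m Sx) => //; rewrite h2 opprK.
exists (w *m M + l *: w) => //.
rewrite mulmxDl -mulmxA hw -scalemxAl scalerDr scalerA -expr2 addrC //.
Qed.

Lemma toC_eig n (M : 'M[R]_n) (u : 'rV_n) (l : R) :
  u != 0 -> u *m M = l *: u -> eigenvalue (map_mx toC M) (toC l).
Proof.
move=> un0 hu; apply/eigenvalueP; exists (map_mx toC u).
  by rewrite -map_mxM hu map_mxZ.
by rewrite map_mx_eq0.
Qed.
Lemma cos_half_bound k : 1 - cos ((pi / 2) / (2 ^ k)%:R) <= ((2 ^ k)%:R)^-1 :> R.
Proof.
elim: k => [|k IH]; first by rewrite expn0 divr1 cos_pihalf subr0 invr1.
set y := (pi / 2) / (2 ^ k.+1)%:R.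
have p2 : (0 : R) < (2 ^ k)%:R by rewrite ltr0n expn_gt0.
have hx : (pi / 2) / (2 ^ k)%:R = y *+ 2.
  rewrite /y expnS natrM -mulr_natr; field; rewrite pnatr_eq0; lia.
rewrite hx cos_mulr2n in IH.
have pih : (0 : R) < pi / 2 by rewrite divr_gt0 // pi_gt0.
have y0 : 0 <= y by rewrite /y divr_ge0 // ltW.
have y1 : y <= pi / 2.
  rewrite /y ler_pdivrMr ?ltr0n ?expn_gt0 //.
  rewrite ler_peMr ?ltW // ltr1n expnS; have := expn_gt0 2 k; lia.
have c0 : 0 <= cos y by apply: cos_ge0_pihalf; rewrite y1 andbT; lra.
have c1 := cos_le1 y.
rewrite expnS natrM invfM.
have : 1 - cos y <= 1 - cos y ^+ 2 by nra.
move: IH; set t := ((2 ^ k)%:R : R)^-1 => IH h.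
rewrite mulrC -/t.
have -> : (2%:R : R)^-1 = 1 / 2 by rewrite div1r.
lra.
Qed.

Lemma yv_neq0 n : yv R n != 0.
Proof.
apply/eqP => /matrixP /(_ 0 0); rewrite !mxE expr0 mul1r /fr.
have p0 : (0 : R) < pi / 2 by rewrite divr_gt0 // pi_gt0.
have f0 : 0 < phi R n by rewrite /phi divr_gt0 // ltr0n.
have f1 : phi R n <= pi / 2.
  rewrite /phi ler_pdivrMr ?ltr0n //; have : (1:R) <= n.+1%:R by rewrite ler1n.
  nra.
have : 0 < sin ((0%:R + 1 / 2) * phi R n).
  by apply: sin_gt0_pihalf; apply/andP; split; lra.
by move=> h e; move: h; rewrite e ltxx.
Qed.

Lemma edge (c e : R) : 0 <= c -> 2 * `|c - 1| < e ->
  exists m, exists2 l : R, 2 * `|c - 1| <= l < e &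
    (eigenvalue (HtilC m c) (l%:C)%C /\ eigenvalue (HtilC m c) ((- l)%:C)%C).
Proof.
move=> hc he.
set d := 2 * `|c - 1|.
have {}he : d < e by exact: he.
have d0 : 0 <= d by rewrite /d mulr_ge0.
have e0 : 0 < e by apply: le_lt_trans he.
have dsq : d ^+ 2 = 4 * (c - 1) ^+ 2 by rewrite /d exprMn real_normK ?num_real //; ring.
set dl := e ^+ 2 - d ^+ 2.
have dl0 : 0 < dl.
  have : 0 < (e - d) * (e + d) by apply: mulr_gt0; lra.
  rewrite /dl; nra.
pose N := Num.bound (8 * c / dl).
have hN : 8 * c / dl < N%:R by apply: archi_boundP; apply: divr_ge0; [lra | exact: ltW].
have hN2 : (N < 2 ^ N)%N by apply: ltn_expl.
set P := ((2 ^ N)%:R : R).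
have P0 : 0 < P by rewrite /P ltr0n expn_gt0.
have hP : 8 * c / dl < P.
  apply: (lt_le_trans hN); rewrite /P ler_nat; exact: ltnW.
have hP' : 8 * c * P^-1 < dl.
  by rewrite ltr_pdivrMr // [dl * P]mulrC -ltr_pdivrMr.
set n := (2 ^ N).-1.
have hn : n.+1 = (2 ^ N)%N by rewrite /n prednK // expn_gt0.
have hcos : 1 - cos (phi R n) <= P^-1 by rewrite /phi hn; exact: cos_half_bound.
have c1 := cos_le1 (phi R n).
set ka := 4 + 4 * c ^+ 2 - 8 * c * cos (phi R n).
have kage : d ^+ 2 <= ka by rewrite dsq /ka; nra.
have kalt : ka < e ^+ 2.
  have : 8 * c * (1 - cos (phi R n)) <= 8 * c * P^-1 by apply: ler_wpM2l => //; lra.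
  rewrite /ka; move: hP'; rewrite /dl dsq; lra.
set l := Num.sqrt ka.
have ka0 : 0 <= ka by apply: le_trans kage; rewrite sqr_ge0.
have l0 : 0 <= l := sqrtr_ge0 ka.
have l2 : l ^+ 2 = ka by rewrite sqr_sqrtr.
have hl1 : d <= l by nra.
have hl2 : l < e by nra.
exists n.+1, l; first by rewrite hl1 hl2.
set w : 'rV[R]_(n.+1 + n.+1) := row_mx (yv R n) 0.
have wn0 : w != 0.
  apply: contra (yv_neq0 n) => /eqP hw; apply/eqP.
  by rewrite -(row_mxKl (yv R n) (0 : 'rV[R]_(n.+1))) -/w hw linear0.
have hw : w *m (Htil n.+1 c *m Htil n.+1 c) = (l ^+ 2) *: w.
  rewrite H2 /w mul_row_block !mulmx0 !mul0mx addr0 add0r mulmxDr mul_mx_scalar -scalemxAr yvA.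
  rewrite scalerA -scalerDl l2 scale_row_mx scaler0 /ka; congr (row_mx _ 0); congr (_ *: _); ring.
have [u un0 hu] := sq_eig (SmH R n.+1 c) (SmSm R n.+1) wn0 hw.
have [un0' hu'] := swap_eig (SmH R n.+1 c) (SmSm R n.+1) un0 hu.
split; [exact: toC_eig un0 hu | exact: toC_eig un0' hu'].
Qed.
End Edge.

Theorem theorem5p2 (R : realType) (c : R) (hc : 0 <= c) :
  (* eigenvalues come in +/- pairs, counted with algebraic multiplicity *)
  (forall (m : nat) (lam : R[i]),
      mup lam (char_poly (HtilC m c)) = mup (- lam) (char_poly (HtilC m c))) /\
  (* (-2|c-1|, 2|c-1|) contains no eigenvalue of Htil_c(m), for every m *)
  (forall (m : nat) (x : R),
      eigenvalue (HtilC m c) (x%:C)%C -> ~ (- (2 * `|c - 1|) < x < 2 * `|c - 1|)) /\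
  (* it is the largest such interval around zero (stable spectral gap) *)
  (forall a b : R, a < 0 < b ->
      (forall (m : nat) (x : R), a < x < b -> ~ eigenvalue (HtilC m c) (x%:C)%C) ->
      - (2 * `|c - 1|) <= a /\ b <= 2 * `|c - 1|).
Proof.
have dsq : (2 * `|c - 1|) ^+ 2 = 4 * (c - 1) ^+ 2 by rewrite exprMn real_normK ?num_real //; ring.
have d0 : 0 <= 2 * `|c - 1| by rewrite mulr_ge0.
split; [|split].
- move=> m lam.
  have -> : HtilC m c = map_mx (real_complex R) (Htil m c) by [].
  apply: mup_even; first exact: monic_neq0 (char_poly_monic _).
  apply: (@char_poly_even _ _ _ (map_mx (real_complex R) (Sm R m))).
  + by rewrite -map_mxM SmH map_mxN map_mxM.
  + rewrite map_unitmx.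
    have h : Sm R m *m (- Sm R m) = 1%:M by rewrite mulmxN SmSm opprK.
    by case: (mulmx1_unit h).
  + by rewrite oddD addbb.
- move=> m x hx /andP [h1 h2].
  have := gapC hc hx; rewrite -dsq => h.
  have : x ^+ 2 < (2 * `|c - 1|) ^+ 2 by nra.
  lra.
- move=> a b /andP [ha hb] H; split.
  + rewrite leNgt; apply/negP => ha'.
    have he : 2 * `|c - 1| < - a by lra.
    have [m [l /andP [l1 l2] [_ hl]]] := edge hc he.
    apply: (H m (- l)) => //; apply/andP; split; lra.
  + rewrite leNgt; apply/negP => hb'.
    have [m [l /andP [l1 l2] [hl _]]] := edge hc hb'.
    apply: (H m l) => //; apply/andP; split; lra.
Qed.
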